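(* Let $A\in\mathbb{R}^{n\times n}$, $B\in\mathbb{R}^{n\times m}$ and consider the system $x^+=Ax+Bu+d$ with disturbance $d\in\mathcal{D}$, where $\mathcal{D}:=\{\sum_{i=1}^{n_d}\alpha_i d^{(i)}:\mathbf{1}^\top\alpha=1,\ \alpha\ge0\}$ is a polyhedral C-set with vertices $d^{(1)},\dots,d^{(n_d)}\in\mathbb{R}^n$. Let $\mathrm{S}\in\mathbb{R}^{n_s\times n}$ be such that $\mathcal{S}:=\{x:\mathrm{S}x\le\mathbf{1}\}$ is a C-set, and $\mathrm{U}\in\mathbb{R}^{n_u\times m}$ with $\mathcal{U}:=\{u:\mathrm{U}u\le\mathbf{1}\}$ (a polyhedral convex set containing the origin in its interior). Let $u_d(0),\dots,u_d(T-1)$ be inputs, $d_d(0),\dots,d_d(T-1)\in\mathcal{D}$ (unknown) disturbances, and $x_d(0),\dots,x_d(T)$ states with $x_d(k+1)=Ax_d(k)+Bu_d(k)+d_d(k)$; set $U_{0,T}:=[u_d(0)\ \cdots\ u_d(T-1)]$, $X_{0,T}:=[x_d(0)\ \cdots\ x_d(T-1)]$, $X_{1,T}:=[x_d(1)\ \cdots\ x_d(T)]$. For $j\in\{1,\dots,T\}$ and $i\in\{1,\dots,n_d\}$ let $\delta_{ji}\in\mathbb{R}^{n\times T}$ be the matrix whose $j$-th column is $T d^{(i)}$ and all other columns are zero. If there exists $G_K\in\mathbb{R}^{T\times n}$ such that $\mathrm{S}\big((X_{1,T}-\delta_{ji})G_Ks+w\big)\le\mathbf{1}$ for all vertices $s$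 of $\mathcal{S}$, all vertices $w$ of $\mathcal{D}$, all $j\in\{1,\dots,T\}$ and all $i\in\{1,\dots,n_d\}$; $\;\mathrm{U}U_{0,T}G_Ks\le\mathbf{1}$ for all vertices $s$ of $\mathcal{S}$; and $I_n=X_{0,T}G_K$, then the state-feedback gain $K=U_{0,T}G_K$ is such that $\mathcal{S}$ is robustly invariant with respect to $\mathcal{D}$ for $x^+=(A+BK)x+d$ and $\mathcal{S}$ is admissible for $\mathcal{U}$.
   Context: $\mathbf{1}$ denotes the vector of all ones of appropriate dimension; inequalities between vectors/matrices are entrywise. A C-set is a convex compact subset of $\mathbb{R}^n$ containing the origin as an interior point. A set $\mathcal{S}$ is robustly invariant with respect to $\mathcal{D}$ for $x^+=Fx+d$ if for every initial condition $x(0)\in\mathcal{S}$ and every disturbance sequence with $d(t)\in\mathcal{D}$ for all $t\ge0$, the resulting solution satisfies $x(t)\in\mathcal{S}$ for all $t\ge0$. $\mathcal{S}$ is admissible for $\mathcal{U}$ (with gain $K$) if $Kx\in\mathcal{U}$ for every $x\in\mathcal{S}$. *)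

(* Defs.v *)
From HB Require Import structures.
From mathcomp Require Import all_boot all_order all_algebra.
From mathcomp Require Import all_classical all_reals all_analysis.
Set Implicit Arguments. Unset Strict Implicit. Unset Printing Implicit Defensive.
Import Order.TTheory GRing.Theory Num.Theory.
Import numFieldNormedType.Exports.
Local Open Scope classical_set_scope.
Local Open Scope ring_scope.

Definition mxle (R : realType) (p q : nat) (M N : 'M[R]_(p, q)) : Prop :=
  forall i j, M i j <= N i j.

Definition ones (R : realType) (p : nat) : 'cV[R]_p := const_mx 1.

Definition polyh (R : realType) (p n : nat) (H : 'M[R]_(p, n)) : set 'cV[R]_n :=
  [set x | mxle (H *m x) (ones R p)].

Definition conv_hull (R : realType) (n nd : nat) (d : 'I_nd -> 'cV[R]_n)
  : set 'cV[R]_n :=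
  [set x | exists alpha : 'I_nd -> R,
     (forall i, 0 <= alpha i) /\ \sum_(i < nd) alpha i = 1 /\
     x = \sum_(i < nd) alpha i *: d i].

Definition convex_set (R : realType) (n : nat) (C : set 'cV[R]_n) : Prop :=
  forall x y (t : R), C x -> C y -> 0 <= t <= 1 -> C (t *: x + (1 - t) *: y).

Definition Cset (R : realType) (n : nat) (C : set 'cV[R]_n) : Prop :=
  convex_set C /\ compact C /\ (interior C) 0.

Definition is_vertex (R : realType) (n : nat) (C : set 'cV[R]_n) (v : 'cV[R]_n)
  : Prop :=
  C v /\ forall y z (t : R), C y -> C z -> 0 < t < 1 ->
    v = t *: y + (1 - t) *: z -> y = v /\ z = v.

Fixpoint traj (R : realType) (n : nat) (F : 'M[R]_n) (x0 : 'cV[R]_n)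
  (d : nat -> 'cV[R]_n) (t : nat) : 'cV[R]_n :=
  match t with
  | 0 => x0
  | t'.+1 => F *m traj F x0 d t' + d t'
  end.

Definition robustly_invariant (R : realType) (n : nat) (S : set 'cV[R]_n)
  (F : 'M[R]_n) (D : set 'cV[R]_n) : Prop :=
  forall x0 (d : nat -> 'cV[R]_n), S x0 -> (forall t, D (d t)) ->
    forall t, S (traj F x0 d t).

Definition admissible (R : realType) (n m : nat) (S : set 'cV[R]_n)
  (U : set 'cV[R]_m) (K : 'M[R]_(m, n)) : Prop :=
  forall x, S x -> U (K *m x).

Definition datamx (R : realType) (p T s : nat) (v : nat -> 'cV[R]_p) : 'M[R]_(p, T) :=
  \matrix_(r < p, c < T) v (s + c)%N r 0.

(* delta_{ji}: j-th column equal to T d^(i), others zero (j is 0-based here) *)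
Definition delta_ji (R : realType) (n T nd : nat) (d : 'I_nd -> 'cV[R]_n)
  (j : 'I_T) (i : 'I_nd) : 'M[R]_(n, T) :=
  \matrix_(r < n, c < T) (if c == j then T%:R * d i r 0 else 0).

(* Main.v *)
Require Import Defs.
From HB Require Import structures.
From mathcomp Require Import all_boot all_order all_algebra.
From mathcomp Require Import all_classical all_reals all_analysis.
From mathcomp Require Import zify ring lra.
Import Order.TTheory GRing.Theory Num.Theory.
Import numFieldNormedType.Exports.
Local Open Scope classical_set_scope.
Local Open Scope ring_scope.

Section Geo.
Variables (R : realType) (n ns : nat) (H : 'M[R]_(ns, n)).

Definition inact (x : 'cV[R]_n) : {set 'I_ns} := [set r | (H *m x) r 0 < 1].

Lemma polyhP x : polyh H x <-> forall r, (H *m x) r 0 <= 1.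
Proof.
have oE : forall i j, ones R ns i j = 1 by move=> i j; rewrite mxE.
rewrite /polyh /mxle /=; split=> [P r|P r j].
  by have := P r 0; rewrite oE.
by rewrite (ord1 j) oE.
Qed.

Lemma Hray (x v : 'cV[R]_n) (s : R) (r : 'I_ns) : (H *m (x + s *: v)) r 0 = (H *m x) r 0 + s * (H *m v) r 0.
Proof. by rewrite mulmxDr -scalemxAr !mxE. Qed.

Lemma exit_ray (x v : 'cV[R]_n) : polyh H x ->
  (forall r, (H *m x) r 0 = 1 -> (H *m v) r 0 = 0) ->
  ~ (forall s, 0 <= s -> polyh H (x + s *: v)) ->
  exists s, 0 < s /\ polyh H (x + s *: v) /\ (#|inact (x + s *: v)| < #|inact x|)%N.
Proof.
move=> /polyhP Px act nall.
have [r0 Hr0 | none] := pickP (fun r => 0 < (H *m v) r 0); last first.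
  exfalso; apply: nall => s s0; apply/polyhP => r; rewrite Hray.
  have := none r => /negbT; rewrite -leNgt => hv.
  have := Px r; have : s * (H *m v) r 0 <= 0 by rewrite mulr_ge0_le0.
  lra.
pose ratio r := (1 - (H *m x) r 0) / (H *m v) r 0.
case: (@arg_minP _ _ _ r0 (fun r => 0 < (H *m v) r 0) ratio Hr0) => rs Prs Hmin.
have hrs : (H *m x) rs 0 < 1.
  rewrite lt_neqAle Px andbT; apply/negP => /eqP /act e.
  by move: Prs; rewrite e ltxx.
have s0 : 0 < ratio rs by rewrite divr_gt0 // subr_gt0.
exists (ratio rs); split=> //; split.
  apply/polyhP => r; rewrite Hray.
  case: (ltrP 0 ((H *m v) r 0)) => hv.
    have := Hmin r hv; rewrite /ratio -(ler_pM2r hv) divfK ?gt_eqF //.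
    rewrite -/(ratio rs) => h; lra.
  have : ratio rs * (H *m v) r 0 <= 0 by rewrite mulr_ge0_le0 // ltW.
  have := Px r; lra.
apply: proper_card; apply/properP; split.
  apply/fintype.subsetP => r; rewrite !inE Hray => h.
  rewrite lt_neqAle Px andbT; apply/negP => /eqP e.
  by move: h; rewrite e (act _ e) mulr0 addr0 ltxx.
exists rs; first by rewrite inE.
by rewrite inE Hray /ratio divfK ?gt_eqF // addrC subrK ltxx.
Qed.

Lemma polytope_conv (Q : set 'cV[R]_n) :
  (forall x v, polyh H x -> v != 0 ->
     (forall s, 0 <= s -> polyh H (x + s *: v)) -> False) ->
  Defs.convex_set Q -> (forall s, is_vertex (polyh H) s -> Q s) ->
  forall x, polyh H x -> Q x.
Proof.
move=> bnd cQ vQ x0 Px0.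
suff: forall k x, polyh H x -> (#|inact x| < k)%N -> Q x by apply; eauto.
elim=> [//|k IH] x Px Hk.
have [/vQ//|nv] := pselect (is_vertex (polyh H) x).
have [y [z [t [Py [Pz [tb [xe ne]]]]]]] : exists y z t, polyh H y /\ polyh H z /\
   0 < t < 1 /\ x = t *: y + (1 - t) *: z /\ ~ (y = x /\ z = x).
  apply: contrapT => nex; apply: nv; split=> // y z t Py Pz tb xe.
  apply: contrapT => nyz; apply: nex; exists y, z, t; do !split => //.
move: (tb) => /andP [t0 t1].
have yx : y != x.
  apply/eqP => e; apply: ne; split => //.
  have t1' : 1 - t != 0 by rewrite subr_eq0 gt_eqF.
  apply/matrixP => i j; have := congr1 (fun M : 'cV[R]_n => M i j) xe.
  rewrite e !mxE => h; apply: (mulfI t1').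
  by transitivity (x i j - t * x i j); [rewrite {1}h; ring | ring].
set v := y - x.
have vn : v != 0 by rewrite subr_eq0.
have actv : forall r, (H *m x) r 0 = 1 -> (H *m v) r 0 = 0.
  move=> r e.
  have e2 : (H *m x) r 0 = t * (H *m y) r 0 + (1 - t) * (H *m z) r 0.
    by rewrite {1}xe mulmxDr -!scalemxAr !mxE.
  have ev : (H *m v) r 0 = (H *m y) r 0 - (H *m x) r 0 by rewrite /v mulmxBr !mxE.
  move/polyhP: Py => /(_ r) hy; move/polyhP: Pz => /(_ r) hz.
  rewrite ev; rewrite e in e2 *.
  have : t * (H *m y) r 0 <= t * 1 by rewrite ler_pM2l.
  have : (1 - t) * (H *m z) r 0 <= (1 - t) * 1 by rewrite ler_pM2l // subr_gt0.
  move=> h2 h3; have h1 : t * (H *m y) r 0 = t * 1 by lra.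
  by rewrite (mulfI (negbT (gt_eqF t0)) h1) subrr.
have [s1 [s1p [P1 c1]]] := exit_ray x v Px actv (bnd x v Px vn).
have actv' : forall r, (H *m x) r 0 = 1 -> (H *m (- v)) r 0 = 0.
  by move=> r /actv e; rewrite mulmxN mxE e oppr0.
have vn' : - v != 0 by rewrite oppr_eq0.
have [s2 [s2p [P2 c2]]] := exit_ray x (- v) Px actv' (bnd x (- v) Px vn').
pose mu := s2 / (s1 + s2).
have hmu : 0 <= mu <= 1.
  apply/andP; split; first by rewrite /mu divr_ge0 ?addr_ge0 ?ltW.
  rewrite /mu ler_pdivrMr ?addr_gt0 // mul1r; lra.
have -> : x = mu *: (x + s1 *: v) + (1 - mu) *: (x + s2 *: - v).
  apply/matrixP => i j; rewrite !mxE /mu.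
  have ne0 : s1 + s2 != 0 by rewrite gt_eqF ?addr_gt0.
  field; exact: ne0.
apply: cQ => //; apply: IH => //.
  by apply: leq_trans c1 _; rewrite -ltnS.
by apply: leq_trans c2 _; rewrite -ltnS.
Qed.

Lemma compact_ray : compact (polyh H) ->
  forall x v, polyh H x -> v != 0 ->
     (forall s, 0 <= s -> polyh H (x + s *: v)) -> False.
Proof.
move=> /compact_bounded bd x v Px vn all.
have [M M0 HM] := pinfty_ex_gt0 bd.
have nv : 0 < `|v| by rewrite normr_gt0.
pose s := (M + `|x| + 1) / `|v|.
have s0 : 0 <= s by rewrite divr_ge0 // addr_ge0 // addr_ge0 // ltW.
have := HM _ (all s s0); have := lerB_normD (s *: v) x.
rewrite [x + _]addrC normrZ ger0_norm // /s divfK ?gt_eqF //.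
rewrite /= => h1 h2; lra.
Qed.

End Geo.

Section Main.
Variables (R : realType) (n : nat).

Lemma polyh0 p (H : 'M[R]_(p, n)) : polyh H 0.
Proof. by apply/polyhP => r; rewrite mulmx0 mxE ler01. Qed.

Lemma polyh_conv2 p (H : 'M[R]_(p, n)) : Defs.convex_set (polyh H).
Proof.
move=> x y t /polyhP Px /polyhP Py /andP [t0 t1]; apply/polyhP => r.
have -> : (H *m (t *: x + (1 - t) *: y)) r 0 = t * (H *m x) r 0 + (1 - t) * (H *m y) r 0.
  by rewrite mulmxDr -!scalemxAr !mxE.
have : t * (H *m x) r 0 <= t * 1 by rewrite ler_wpM2l.
have : (1 - t) * (H *m y) r 0 <= (1 - t) * 1 by rewrite ler_wpM2l // subr_ge0.
move: (Px r) (Py r); lra.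
Qed.

Lemma polyh_sum p (H : 'M[R]_(p, n)) (I : finType) (lam : I -> R) (y : I -> 'cV[R]_n) :
  (forall i, 0 <= lam i) -> \sum_i lam i = 1 -> (forall i, polyh H (y i)) ->
  polyh H (\sum_i lam i *: y i).
Proof.
move=> l0 l1 Py; apply/polyhP => r.
rewrite mulmx_sumr summxE.
under eq_bigr do rewrite -scalemxAr mxE.
rewrite -l1; apply: ler_sum => i _.
rewrite -[X in _ <= X]mulr1; apply: ler_wpM2l => //.
by move/polyhP: (Py i).
Qed.


Lemma delta_mul T nd (d : 'I_nd -> 'cV[R]_n) (j : 'I_T) (i : 'I_nd) (g : 'cV[R]_T) :
  delta_ji d j i *m g = (T%:R * g j 0) *: d i.
Proof.
apply/matrixP => r c; rewrite (ord1 c) !mxE (bigD1 j) //= big1 ?addr0.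
  by rewrite !mxE eqxx; ring.
by move=> k /negbTE kj; rewrite !mxE kj mul0r.
Qed.

Lemma data_eq m T (A : 'M[R]_n) (B : 'M[R]_(n, m)) (ud : nat -> 'cV[R]_m)
  (dd xd : nat -> 'cV[R]_n) :
  (forall k, (k < T)%N -> xd k.+1 = A *m xd k + B *m ud k + dd k) ->
  datamx T 1 xd = A *m datamx T 0 xd + B *m datamx T 0 ud + datamx T 0 dd.
Proof.
move=> hx; apply/matrixP => r c.
rewrite !mxE add1n hx // !mxE add0n; congr (_ + _ + _).
  by apply: eq_bigr => k _; rewrite !mxE add0n.
by apply: eq_bigr => k _; rewrite !mxE add0n.
Qed.

End Main.
Theorem proposition1 (R : realType) (n m nd ns nu T : nat)
  (A : 'M[R]_n) (B : 'M[R]_(n, m))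
  (d : 'I_nd -> 'cV[R]_n) (Smx : 'M[R]_(ns, n)) (Umx : 'M[R]_(nu, m))
  (ud : nat -> 'cV[R]_m) (dd : nat -> 'cV[R]_n) (xd : nat -> 'cV[R]_n)
  (GK : 'M[R]_(T, n)) :
  Cset (conv_hull d) ->
  (forall i, is_vertex (conv_hull d) (d i)) ->
  Cset (polyh Smx) ->
  (forall k, (k < T)%N -> conv_hull d (dd k)) ->
  (forall k, (k < T)%N -> xd k.+1 = A *m xd k + B *m ud k + dd k) ->
  (forall s w (j : 'I_T) (i : 'I_nd),
     is_vertex (polyh Smx) s -> is_vertex (conv_hull d) w ->
     mxle (Smx *m ((datamx T 1 xd - delta_ji d j i) *m GK *m s + w)) (ones R ns)) ->
  (forall s, is_vertex (polyh Smx) s ->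
     mxle (Umx *m (datamx T 0 ud *m GK *m s)) (ones R nu)) ->
  1%:M = datamx T 0 xd *m GK ->
  robustly_invariant (polyh Smx) (A + B *m (datamx T 0 ud *m GK)) (conv_hull d) /\
  admissible (polyh Smx) (polyh Umx) (datamx T 0 ud *m GK).
Proof.
move=> [_ [_ _]] dvert [_ [cptS _]] hdd hx hS hU hI.
set K := datamx T 0 ud *m GK.
set F := A + B *m K.
set X1 := datamx T 1 xd.
set D0 := datamx T 0 dd.
have Fe : F = (X1 - D0) *m GK.
  rewrite /X1 (@data_eq _ _ _ _ _ _ _ _ _ hx) addrK mulmxDl -!mulmxA -hI mulmx1 /F /K.
  by rewrite mulmxA.
have key : forall s, is_vertex (polyh Smx) s -> forall i', polyh Smx (F *m s + d i').
  move=> s vs i'.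
  case: (posnP T) => [T0 | Tpos].
    have z : forall x : 'cV[R]_n, x = 0.
      move=> x; rewrite -[x]mul1mx hI -mulmxA; move: (GK *m x); rewrite T0 => y.
      by apply/matrixP => r c; rewrite !mxE big_ord0.
    by rewrite (z (F *m s + d i')); apply: polyh0.
  have [alpha halpha] := choice (fun j : 'I_T => hdd j (ltn_ord j)).
  have Tn0 : T%:R != 0 :> R by rewrite pnatr_eq0 -lt0n.
  set g := GK *m s.
  pose lam (p : 'I_T * 'I_nd) := alpha p.1 p.2 / T%:R.
  have sumlam : \sum_p lam p = 1.
    rewrite /lam -(pair_bigA _ (fun j i => alpha j i / T%:R)) /=.
    under eq_bigr => j _ do rewrite -mulr_suml (halpha j).2.1 mul1r.
    by rewrite sumr_const card_ord -[_ *+ T]mulr_natr mulVf.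
  have D0g : D0 *m g = \sum_j g j 0 *: dd j.
    apply/matrixP => r c; rewrite (ord1 c) mxE summxE; apply: eq_bigr => j _.
    by rewrite !mxE add0n mulrC.
  have E1 : F *m s + d i' = X1 *m g + d i' - \sum_p (alpha p.1 p.2 * g p.1 0) *: d p.2.
    rewrite Fe -mulmxA -/g mulmxBl D0g addrAC; congr (_ - _).
    rewrite -(pair_bigA _ (fun j i => (alpha j i * g j 0) *: d i)) /=.
    apply: eq_bigr => j _; rewrite (halpha j).2.2 scaler_sumr.
    by apply: eq_bigr => i _; rewrite scalerA mulrC.
  have E2 : \sum_p lam p *: ((X1 - delta_ji d p.1 p.2) *m GK *m s + d i') =
      X1 *m g + d i' - \sum_p (alpha p.1 p.2 * g p.1 0) *: d p.2.
    under eq_bigr => p _ do rewrite -mulmxA -/g mulmxBl delta_mul addrAC scalerBr scalerA.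
    rewrite sumrB -scaler_suml sumlam scale1r; congr (_ - _).
    apply: eq_bigr => p _; congr (_ *: _); rewrite /lam; field.
    exact: Tn0.
  rewrite E1 -E2; apply: polyh_sum.
  - by move=> p; rewrite /lam divr_ge0 // (halpha p.1).1.
  - exact: sumlam.
  - by move=> p; apply: hS.
have key2 : forall s, is_vertex (polyh Smx) s -> forall w, conv_hull d w -> polyh Smx (F *m s + w).
  move=> s vs w [beta [b0 [b1 ->]]].
  have -> : F *m s + \sum_i beta i *: d i = \sum_i beta i *: (F *m s + d i).
    by rewrite (eq_bigr _ (fun i _ => scalerDr _ _ _)) big_split /= -scaler_suml b1 scale1r.
  by apply: polyh_sum => // i; apply: key.
have inv : forall x, polyh Smx x -> forall w, conv_hull d w -> polyh Smx (F *m x + w).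
  apply: (@polytope_conv _ _ _ Smx _ (@compact_ray _ _ _ Smx cptS)) => //.
  move=> x y t Qx Qy ht w Dw.
  have -> : F *m (t *: x + (1 - t) *: y) + w = t *: (F *m x + w) + (1 - t) *: (F *m y + w).
    rewrite mulmxDr -!scalemxAr !scalerDr addrACA -scalerDl [t + _]addrC subrK scale1r.
    by [].
  by apply: polyh_conv2 => //; [apply: Qx | apply: Qy].
split.
  move=> x0 dseq Sx0 Dd; elim=> [//|t IH] /=.
  exact: inv.
apply: (@polytope_conv _ _ _ Smx _ (@compact_ray _ _ _ Smx cptS)) => //.
  move=> x y t Qx Qy ht; rewrite /= mulmxDr -!scalemxAr.
  exact: polyh_conv2.
Qed.
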